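(* Let $f(x,y)=\left(x+\frac1y,\ y-\frac1y-x\right)$ be the Hénon–Devaney map, with inverse $f^{-1}(u,v)=\left(u-\frac{1}{u+v},\ u+v\right)$ defined for $u+v\neq0$. For $n\ge1$ let $T_n$ be the set of $t\in\mathbb{R}$ such that $f^{-k}(t,0)$ is defined and does not lie on the line $\{y=-x\}$ for every $k=0,1,\dots,n-1$ (so that $f^{-n}(t,0)$ is defined), and write $f^{-n}(t,0)=(f^{-n}_x(t,0),f^{-n}_y(t,0))$. Then for every $n\ge1$: (a) on each connected component of $T_n$, both functions $t\mapsto f^{-n}_x(t,0)$ and $t\mapsto f^{-n}_y(t,0)$ are increasing; (b) $f^{-(n-1)}(\{y=0\})\cap f^{-n}(\{y=0\})=\emptyset$, where $f^{-k}(\{y=0\})=\{f^{-k}(t,0): t\in T_k\}$ for $k\ge1$ and $f^{0}(\{y=0\})=\{y=0\}$. *)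

(* Defs.v *)
From HB Require Import structures.
From mathcomp Require Import all_boot all_order all_algebra.
From mathcomp Require Import all_classical all_reals all_analysis.
Set Implicit Arguments. Unset Strict Implicit. Unset Printing Implicit Defensive.
Import Order.TTheory GRing.Theory Num.Theory.
Local Open Scope ring_scope.
Local Open Scope classical_set_scope.

Section Henon.
Variable R : realType.

Definition henon_inv (p : R * R) : option (R * R) :=
  if p.1 + p.2 == 0 then None
  else Some (p.1 - 1 / (p.1 + p.2), p.1 + p.2).

Fixpoint henon_inv_iter (k : nat) (p : R * R) : option (R * R) :=
  match k with
  | 0 => Some p
  | k'.+1 => match henon_inv_iter k' p with
             | Some q => henon_inv q
             | None => None
             end
  end.

Definition T (n : nat) : set R :=
  [set t | forall k, (k < n)%N ->
     exists q, henon_inv_iter k (t, 0) = Some q /\ q.1 + q.2 != 0].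

(* f^{-n}(t,0) (meaningful for t in T n; junk value (0,0) otherwise). *)
Definition henon_inv_n (n : nat) (t : R) : R * R :=
  odflt (0, 0) (henon_inv_iter n (t, 0)).

Definition preimage_line (k : nat) : set (R * R) :=
  if k is 0 then [set p | p.2 = 0]
  else [set henon_inv_n k t | t in T k].

End Henon.

(* Main.v *)
Require Import Defs.
From HB Require Import structures.
From mathcomp Require Import all_boot all_order all_algebra.
From mathcomp Require Import all_classical all_reals all_analysis.
From mathcomp Require Import ring lra.
Import numFieldTopology.Exports numFieldNormedType.Exports.
Import Order.TTheory GRing.Theory Num.Theory.
Local Open Scope ring_scope.
Local Open Scope classical_set_scope.
Set Implicit Arguments.

Section S.
Variable R : realType.

Fixpoint XY (k : nat) (t : R) : R * R :=
  match k with
  | 0 => (t, 0)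
  | k'.+1 => ((XY k' t).1 - 1 / ((XY k' t).1 + (XY k' t).2),
              (XY k' t).1 + (XY k' t).2)
  end.

Lemma iter_XY n t : T n t -> forall k, (k <= n)%N ->
  henon_inv_iter k (t, 0) = Some (XY k t).
Proof.
move=> Ht; elim=> [//|k IH] Hk /=.
have Hk' : (k < n)%N by [].
have Hk2 : (k <= n)%N by exact: ltnW.
rewrite (IH Hk2) /=.
have [q [Hq Hq0]] := Ht k Hk'.
rewrite (IH Hk2) in Hq; case: Hq => <- in Hq0.
by rewrite /henon_inv (negbTE Hq0).
Qed.
Arguments iter_XY [n t] Ht [k] _.



Lemma T_nz n t k : T n t -> (k < n)%N -> (XY k t).1 + (XY k t).2 != 0.
Proof.
move=> Ht Hk; have [q [Hq Hq0]] := Ht k Hk.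
by rewrite (iter_XY Ht (ltnW Hk)) in Hq; case: Hq => ->.
Qed.
Arguments T_nz [n t k] _ _.



Lemma XY_cont k u : (forall j, (j < k)%N -> (XY j u).1 + (XY j u).2 != 0) ->
  {for u, continuous (fun v => (XY k v).1)} /\
  {for u, continuous (fun v => (XY k v).2)}.
Proof.
elim: k => [|k IH] H /=.
  by split; [exact: cvg_id | exact: cvg_cst].
have [H1 H2] := IH (fun j hj => H j (ltnW hj)).
have Hs : {for u, continuous (fun v => (XY k v).1 + (XY k v).2)}.
  exact: (cvgD H1 H2).
split; last exact: Hs.
have -> : (fun v => (XY k v).1 - 1 / ((XY k v).1 + (XY k v).2)) =
  (fun v => (XY k v).1) - (fun v => ((XY k v).1 + (XY k v).2)^-1).
  by apply: funext => v; rewrite div1r.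
apply: cvgB => //.
exact: (cvgV (H k (ltnSn k)) Hs).
Qed.
Arguments XY_cont [k u] _.



Lemma cc_interval n s t x : connected_component (@T R n) s t -> s <= x <= t -> @T R n x.
Proof.
move=> [C [Cs CT Cc] Ct] /andP[h1 h2].
apply: CT; exact: ((connected_intervalP C).1 Cc s t Cs Ct x (introT andP (conj h1 h2))).
Qed.
Arguments cc_interval [n s t x] _ _.



Lemma inj_inv (a b q : R * R) : henon_inv a = Some q -> henon_inv b = Some q -> a = b.
Proof.
rewrite /henon_inv; case: ifP => // _ [<-]; case: ifP => // _ [].
move=> h1 h2; move: h1; rewrite h2 => /eqP; rewrite subr_eq subrK => /eqP h1.
case: a b h1 h2 => a1 a2 [b1 b2] /= -> h; congr pair.
by move/addrI: h.
Qed.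
Arguments inj_inv [a b q] _ _.



Lemma inj_iter k (a b q : R * R) : henon_inv_iter k a = Some q -> henon_inv_iter k b = Some q -> a = b.
Proof.
elim: k q => [|k IH] q /=; first by move=> [->] [->].
case Ea: (henon_inv_iter k a) => [qa|] //; case Eb: (henon_inv_iter k b) => [qb|] //.
move=> ha hb; have E := inj_inv ha hb; subst qb.
exact: (IH qa Ea Eb).
Qed.
Arguments inj_iter [k a b q] _ _.



Lemma iter_shift k (p : R * R) : henon_inv_iter k.+1 p =
  match henon_inv p with Some q => henon_inv_iter k q | None => None end.
Proof.
elim: k => [|k IH]; first by rewrite /=; case: (henon_inv p).
have -> : henon_inv_iter k.+2 p = match henon_inv_iter k.+1 p with Some q => henon_inv q | None => None end by [].
rewrite IH; by case: (henon_inv p).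
Qed.


Lemma mono n s t : (forall x, s <= x <= t -> @T R n x) -> forall k, (k <= n)%N ->
  forall a b, s <= a -> a < b -> b <= t ->
  (XY k a).1 < (XY k b).1 /\ (XY k a).2 <= (XY k b).2.
Proof.
move=> HT; elim=> [|k IH] Hk a b sa ab bt /=.
  by split => //; rewrite lexx.
have Hk' : (k < n)%N := Hk.
have [IH1 IH2] := IH (ltnW Hk) a b sa ab bt.
have Ta : T n a by apply: HT; apply/andP; split => //; lra.
have Tb : T n b by apply: HT; apply/andP; split => //; lra.
have ya0 := T_nz Ta Hk'. have yb0 := T_nz Tb Hk'.
set ya := (XY k a).1 + (XY k a).2 in ya0 *.
set yb := (XY k b).1 + (XY k b).2 in yb0 *.
have Hy : ya < yb by rewrite /ya /yb; lra.
have Hpos : 0 < ya * yb.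
  case: (ltgtP ya 0) => [yan|yap|/eqP]; last by rewrite (negbTE ya0).
  - case: (ltgtP yb 0) => [ybn|ybp|/eqP]; last by rewrite (negbTE yb0).
    + nra.
    + exfalso.
      have [c] : exists2 c, c \in `[a, b]%R & (fun v => (XY k v).1 + (XY k v).2) c = 0.
        apply: (@IVT R (fun v => (XY k v).1 + (XY k v).2) a b 0); first lra.
          apply: continuous_in_subspaceT => x.
          rewrite inE /= in_itv /= => /andP[xa xb].
          have Tx : T n x by apply: HT; apply/andP; split; lra.
          have [c1 c2] := XY_cont (fun j hj => T_nz Tx (ltn_trans hj Hk')).
          exact: cvgD c1 c2.
        apply/andP; split.
          by rewrite ge_min; apply/orP; left; rewrite -/ya; lra.
        by rewrite le_max; apply/orP; right; rewrite -/yb; lra.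
      rewrite in_itv /= => /andP[ca cb] /eqP.
      have Tc : T n c by apply: HT; apply/andP; split; lra.
      by rewrite (negbTE (T_nz Tc Hk')).
  - case: (ltgtP yb 0) => [ybn|ybp|/eqP]; last by rewrite (negbTE yb0).
    + lra.
    + nra.
split; last lra.
have E : 1 / ya - 1 / yb = (yb - ya) / (ya * yb) by field; apply/andP; split.
have : 0 < (yb - ya) / (ya * yb) by apply: divr_gt0 => //; lra.
rewrite -E; lra.
Qed.
Arguments mono [n s t] _ [k] _ [a b] _ _ _.


End S.
Arguments iter_XY {R} [n t] Ht [k] _.
Arguments T_nz {R} [n t k] _ _.
Arguments XY_cont {R} [k u] _.
Arguments cc_interval {R} [n s t x] _ _.
Arguments inj_inv {R} [a b q] _ _.
Arguments inj_iter {R} [k a b q] _ _.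
Arguments mono {R} [n s t] _ [k] _ [a b] _ _ _.

Theorem mainTheorem3 (R : realType) (n : nat) (hn : (1 <= n)%N) :
  (forall s t : R, @T R n s -> @connected_component R (@T R n) s t -> s < t ->
     (henon_inv_n n s).1 < (henon_inv_n n t).1 /\
     (henon_inv_n n s).2 < (henon_inv_n n t).2) /\
  @preimage_line R n.-1 `&` @preimage_line R n = set0.
Proof.
split.
  move=> s t Ts cc st.
  have HT x : s <= x <= t -> T n x := cc_interval cc.
  have Tt : T n t by apply: HT; rewrite lexx andbT ltW.
  rewrite /henon_inv_n (iter_XY Ts (leqnn n)) (iter_XY Tt (leqnn n)) /=.
  clear cc; case: n hn Ts Tt HT => // m _ Ts Tt HT.
  have [h1 _] := mono HT (leqnn m.+1) (lexx s) st (lexx t).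
  have [h3 h4] := mono HT (leqnSn m) (lexx s) st (lexx t).
  split => //=; lra.
apply/seteqP; split => [p [H1 H2]|p //].
case: n hn H1 H2 => [//|[|m]] _ H1 H2.
  move: H2 H1 => /= [t Tt <-] H1.
  have := T_nz Tt (ltn0Sn 0).
  move: H1; rewrite /henon_inv_n (iter_XY Tt (leqnn 1)) /= => ->.
  by rewrite eqxx.
move: H1 H2 => /= [s Ts <-] [t Tt] E.
have t0 := T_nz Tt (ltn0Sn m.+1).
rewrite /henon_inv_n (iter_XY Ts (leqnn _)) (iter_XY Tt (leqnn _)) in E.
have E' : XY _ m.+2 t = XY _ m.+1 s := E.
have := iter_XY Tt (leqnn m.+2).
have H0 : henon_inv (t, 0 : R) = Some ((t, 0 : R).1 - 1 / ((t, 0 : R).1 + (t, 0 : R).2), (t, 0 : R).1 + (t, 0 : R).2).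
  by rewrite /henon_inv (negbTE t0).
rewrite E' iter_shift H0 => E2.
have E1 := iter_XY Ts (leqnn m.+1).
have := inj_iter E1 E2 => -[_ h].
move: t0 h => /= t0 h; by rewrite -h eqxx in t0.
Qed.
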